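(* In $X=(\mathbb{R}^2,\|\cdot\|_\infty)$ let $A=\{(x,y):x>0,\ y\ge1/x\}$, $B=B_1\cup B_2$ with $B_1=\{(x,y):x>-1,\ y\le\frac{1}{x+1}-1\}$ and $B_2=\{(x,y):x\le-1,\ y\in\mathbb{R}\}$, and let $\overline{A}=\{(x,y):x>0,\ y=1/x\}$ and $\overline{B}=\{(x,y):x>-1,\ y=\frac{1}{x+1}-1\}$. Define $T:A\cup B\to\mathbb{R}^2$ by $$Tz=\left(-\tfrac{d(z,\overline{A})}{2},-\tfrac{d(z,\overline{A})}{2}\right)\ \text{for }z\in A,\qquad Tz=\left(1+\tfrac{d(z,\overline{B})}{2},1+\tfrac{d(z,\overline{B})}{2}\right)\ \text{for }z\in B.$$ Then $\mathrm{dist}(A,B)=1$, $T(A)\subseteq B$, $T(B)\subseteq A$, and $$\|Ta-Tb\|_\infty\le\tfrac12\|a-b\|_\infty+\tfrac12\,\mathrm{dist}(A,B)\quad\text{for all }a\in A,\ b\in B.$$ Consequently $T$ has a unique best proximity point in $A$, even though the ordered pair $(A,B)$ does not have the $UC$ property.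
   Context: $\|(x,y)\|_\infty=\max\{|x|,|y|\}$; $d(z,S)=\inf\{\|z-s\|_\infty:s\in S\}$; $\mathrm{dist}(A,B)=\inf\{\|a-b\|_\infty:a\in A,b\in B\}$. A point $x\in A$ is a best proximity point of $T$ in $A$ if $\|x-Tx\|_\infty=\mathrm{dist}(A,B)$. The ordered pair $(A,B)$ has the $UC$ property if for all sequences $\{x_n\},\{z_n\}\subset A$, $\{y_n\}\subset B$ with $\lim_n\|x_n-y_n\|_\infty=\lim_n\|z_n-y_n\|_\infty=\mathrm{dist}(A,B)$ one has $\lim_n\|x_n-z_n\|_\infty=0$. *)

(* Defs.v *)
From HB Require Import structures.
From mathcomp Require Import all_boot all_order all_algebra.
From mathcomp Require Import all_classical all_reals all_analysis.
Set Implicit Arguments. Unset Strict Implicit. Unset Printing Implicit Defensive.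
Import Order.TTheory GRing.Theory Num.Theory.
Import numFieldNormedType.Exports.
Local Open Scope classical_set_scope.
Local Open Scope ring_scope.

Section Defs.
Variable R : realType.
Notation P := (R * R)%type.

Definition ninf (a b : P) : R := Num.max `|a.1 - b.1| `|a.2 - b.2|.

Definition dpt (z : P) (S : set P) : R := inf [set ninf z s | s in S].

Definition dist (A B : set P) : R :=
  inf [set r | exists a b, A a /\ B b /\ r = ninf a b].

Definition best_prox (A : set P) (B : set P) (T : P -> P) (x : P) : Prop :=
  A x /\ ninf x (T x) = dist A B.

Definition UC_property (A B : set P) : Prop :=
  forall (x z y : nat -> P),
    (forall n, A (x n)) -> (forall n, A (z n)) -> (forall n, B (y n)) ->
    (fun n => ninf (x n) (y n)) @ \oo --> dist A B ->
    (fun n => ninf (z n) (y n)) @ \oo --> dist A B ->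
    (fun n => ninf (x n) (z n)) @ \oo --> (0 : R).

Definition exA : set P := [set p | 0 < p.1 /\ p.1^-1 <= p.2].
Definition exB1 : set P := [set p | -1 < p.1 /\ p.2 <= (p.1 + 1)^-1 - 1].
Definition exB2 : set P := [set p | p.1 <= -1].
Definition exB : set P := exB1 `|` exB2.
Definition exAbar : set P := [set p | 0 < p.1 /\ p.2 = p.1^-1].
Definition exBbar : set P := [set p | -1 < p.1 /\ p.2 = (p.1 + 1)^-1 - 1].

(* T on A u B (A and B are disjoint); outside A u B the value is irrelevant
   and T uses the B-formula. *)
Definition exT (z : P) : P :=
  if `[< exA z >] then (- (dpt z exAbar / 2), - (dpt z exAbar / 2))
  else (1 + dpt z exBbar / 2, 1 + dpt z exBbar / 2).

End Defs.

(* Main.v *)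
Require Import Defs.
From HB Require Import structures.
From mathcomp Require Import all_boot all_order all_algebra.
From mathcomp Require Import all_classical all_reals all_analysis.
From mathcomp Require Import ring lra.
Import Order.TTheory GRing.Theory Num.Theory.
Import numFieldNormedType.Exports.
Local Open Scope classical_set_scope.
Local Open Scope ring_scope.
Section H.
Variable R : realType.
Implicit Types (a b p : (R * R)%type).

Lemma ninf_ge0 a b : 0 <= ninf a b.
Proof. by rewrite /ninf le_max normr_ge0. Qed.

Lemma dpt_ge0 z (S : set (R * R)) : S !=set0 -> 0 <= dpt z S.
Proof.
move=> [s Ss]; apply: lb_le_inf; first by exists (ninf z s), s.
by move=> _ [t _ <-]; exact: ninf_ge0.
Qed.

Lemma dpt_le z (S : set (R * R)) s : S s -> dpt z S <= ninf z s.
Proof.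
move=> Ss; apply: ge_inf; last by exists s.
by exists 0 => _ [t _ <-]; exact: ninf_ge0.
Qed.

Definition sq (d : R) := Num.sqrt (d ^+ 2 + 4).
Lemma sq_prop d : 0 <= sq d /\ sq d ^+ 2 = d ^+ 2 + 4.
Proof.
split; first exact: sqrtr_ge0.
rewrite sqr_sqrtr //; rewrite addr_ge0 // ?sqr_ge0 //.
Qed.

Definition rA a := (a.1 + a.2 - sq (a.1 - a.2)) / 2.
Definition rB b := (sq (b.1 - b.2) - (b.1 + 1 + (b.2 + 1))) / 2.

Lemma PA_prop a : 0 < a.1 - rA a /\ (a.1 - rA a) * (a.2 - rA a) = 1.
Proof.
rewrite /rA; have [h1 h2] := sq_prop (a.1 - a.2).
set s := sq _ in h1 h2 *; split; nra.
Qed.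

Lemma QB_prop b : 0 < b.1 + 1 + rB b /\ (b.1 + 1 + rB b) * (b.2 + 1 + rB b) = 1.
Proof.
rewrite /rB; have [h1 h2] := sq_prop (b.1 - b.2).
set s := sq _ in h1 h2 *; split; nra.
Qed.

Lemma inv_mul {x y : R} : 0 < x -> x * y = 1 -> y = x^-1.
Proof.
move=> x0 e; have nz : x != 0 by rewrite gt_eqF.
by apply: (mulfI nz); rewrite mulfV.
Qed.

Lemma PA_bar a : exAbar (a.1 - rA a, a.2 - rA a).
Proof. by have [h1 h2] := PA_prop a; split => //=; apply: inv_mul. Qed.

Lemma QB_bar b : exBbar (b.1 + rB b, b.2 + rB b).
Proof.
have [h1 h2] := QB_prop b; split => /=; first lra.
have -> : b.1 + rB b + 1 = b.1 + 1 + rB b by lra.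
rewrite -(inv_mul h1 h2); lra.
Qed.

Lemma rA_ge0 a : exA a -> 0 <= rA a.
Proof.
move=> [a1 a2]; have i1 : a.1 * a.1^-1 = 1 by rewrite mulfV // gt_eqF.
have ip : 0 < a.1^-1 by rewrite invr_gt0.
have p : 1 <= a.1 * a.2 by nra.
rewrite /rA; have [h1 h2] := sq_prop (a.1 - a.2).
set s := sq _ in h1 h2 *; nra.
Qed.

Lemma rB_ge0 b : exB b -> 0 <= rB b.
Proof.
move=> Hb.
have : (b.1 + 1) * (b.2 + 1) <= 1 \/ b.1 + 1 + (b.2 + 1) <= 0.
  case: Hb => [[b1 b2]|b1].
    left; set x := b.1 + 1 in b2 *; have x0 : 0 < x by rewrite /x; lra.
    have i1 : x * x^-1 = 1 by rewrite mulfV // gt_eqF.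
    nra.
  have b1' : b.1 + 1 <= 0 by move: b1; rewrite /exB2 /=; lra.
  case: (lerP (b.1 + 1 + (b.2 + 1)) 0) => h; [right=> //|left].
  have : 0 < b.2 + 1 by lra.
  nra.
rewrite /rB; have [h1 h2] := sq_prop (b.1 - b.2).
set s := sq _ in h1 h2 *; case=> h; nra.
Qed.

Lemma dA_le a : exA a -> dpt a (@exAbar R) <= rA a.
Proof.
move=> Ha; apply: (le_trans (@dpt_le a _ _ (PA_bar a))).
rewrite /ninf /=.
have -> : a.1 - (a.1 - rA a) = rA a by lra.
have -> : a.2 - (a.2 - rA a) = rA a by lra.
rewrite /ninf /= maxxx ger0_norm //; exact: rA_ge0.
Qed.

Lemma dB_le b : exB b -> dpt b (@exBbar R) <= rB b.
Proof.
move=> Hb; apply: (le_trans (@dpt_le b _ _ (QB_bar b))).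
rewrite /ninf /=.
have -> : b.1 - (b.1 + rB b) = - rB b by lra.
have -> : b.2 - (b.2 + rB b) = - rB b by lra.
rewrite /ninf /= maxxx normrN ger0_norm //; exact: rB_ge0.
Qed.

Lemma key a b : exA a -> exB b -> 1 + rA a + rB b <= ninf a b.
Proof.
move=> Ha Hb; have [p1 p2] := PA_prop a; have [q1 q2] := QB_prop b.
rewrite /ninf; case: (lerP (1 + rA a + rB b) (a.1 - b.1)) => h1.
  by rewrite le_max (le_trans h1 (ler_norm _)).
case: (lerP (1 + rA a + rB b) (a.2 - b.2)) => h2.
  by rewrite le_max (le_trans h2 (ler_norm _)) orbT.
exfalso.
set P1 := a.1 - rA a in p1 p2; set P2 := a.2 - rA a in p2.
set Q1 := b.1 + 1 + rB b in q1 q2; set Q2 := b.2 + 1 + rB b in q2.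
have l1 : P1 < Q1 by rewrite /P1 /Q1; lra.
have l2 : P2 < Q2 by rewrite /P2 /Q2; lra.
have P20 : 0 < P2 by nra.
nra.
Qed.


Lemma A11 : @exA R (1, 1).
Proof. by split => //=; rewrite invr1. Qed.
Lemma B00 : @exB R (0, 0).
Proof. by left; split => //=; rewrite add0r invr1 subrr. Qed.
Lemma Abar11 : @exAbar R (1, 1).
Proof. by split => //=; rewrite invr1. Qed.
Lemma Bbar00 : @exBbar R (0, 0).
Proof. by split => //=; rewrite add0r invr1 subrr. Qed.

Lemma ninf_self a : ninf a a = 0.
Proof. by rewrite /ninf !subrr normr0 maxxx. Qed.

Lemma disjAB a : exA a -> exB a -> False.
Proof.
move=> Ha Hb; have := key a a Ha Hb; rewrite ninf_self.
have := rA_ge0 a Ha; have := rB_ge0 a Hb; lra.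
Qed.

Lemma distAB : dist (@exA R) (@exB R) = 1.
Proof.
have S1 : [set r | exists a b, @exA R a /\ @exB R b /\ r = ninf a b] 1.
  exists (1, 1), (0, 0); split; first exact: A11; split; first exact: B00.
  by rewrite /ninf /= !subr0 normr1 maxxx.
apply: le_anti; apply/andP; split.
  apply: ge_inf => //; exists 0 => _ [a [b [_ [_ ->]]]]; exact: ninf_ge0.
apply: lb_le_inf; first by exists 1.
move=> _ [a [b [Ha [Hb ->]]]]; have := key a b Ha Hb.
have := rA_ge0 a Ha; have := rB_ge0 b Hb; lra.
Qed.

Lemma TA a : exA a -> exT a = (- (dpt a (@exAbar R) / 2), - (dpt a (@exAbar R) / 2)).
Proof. by move=> Ha; rewrite /exT asboolT. Qed.

Lemma TB b : exB b -> exT b = (1 + dpt b (@exBbar R) / 2, 1 + dpt b (@exBbar R) / 2).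
Proof. by move=> Hb; rewrite /exT asboolF // => Ha; exact: disjAB Ha Hb. Qed.

Lemma dA_ge0 a : 0 <= dpt a (@exAbar R).
Proof. by apply: dpt_ge0; exists (1, 1); exact: Abar11. Qed.
Lemma dB_ge0 b : 0 <= dpt b (@exBbar R).
Proof. by apply: dpt_ge0; exists (0, 0); exact: Bbar00. Qed.

Lemma TA_B a : exA a -> exB (exT a).
Proof.
move=> Ha; rewrite TA //; have d0 := dA_ge0 a.
set u := dpt a _ / 2; have u0 : 0 <= u by rewrite /u; lra.
case: (lerP 1 u) => hu; first by right; rewrite /exB2 /=; lra.
left; split => /=; first lra.
have -> : - u + 1 = 1 - u by lra.
have p : 0 < 1 - u by lra.
have iv := @mulfV _ _ (lt0r_neq0 p); have iv0 : 0 < (1 - u)^-1 by rewrite invr_gt0.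
nra.
Qed.

Lemma TB_A b : exB b -> exA (exT b).
Proof.
move=> Hb; rewrite TB //; have d0 := dB_ge0 b.
set x := 1 + _; have x1 : 1 <= x by rewrite /x; lra.
have p : 0 < x by lra.
have iv := @mulfV _ _ (lt0r_neq0 p); have iv0 : 0 < x^-1 by rewrite invr_gt0.
split => /=; [lra|nra].
Qed.


Lemma hpos_gen (m : R) : 1 <= m -> 0 < m^-1 /\ m^-1 <= 1 /\ m * m^-1 = 1.
Proof.
move=> q; have p : 0 < m by lra.
have iv := @mulfV _ _ (lt0r_neq0 p).
have i0 : 0 < m^-1 by rewrite invr_gt0.
have h : 0 <= (m - 1) * m^-1 by apply: mulr_ge0; lra.
split => //; split => //; move: h; rewrite mulrBl iv mul1r; lra.
Qed.

Lemma inv_anti (m m' : R) : 1 <= m -> m <= m' -> m'^-1 <= m^-1.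
Proof.
move=> h1 h2; have [a0 [a1 a2]] := hpos_gen m h1.
have [b0 [b1 b2]] := hpos_gen m' (le_trans h1 h2).
have h : 0 <= (m' - m) * (m'^-1 * m^-1) by apply: mulr_ge0; [lra | apply: mulr_ge0; lra].
move: h; have -> : (m' - m) * (m'^-1 * m^-1) = m^-1 - m'^-1.
  by field; apply/andP; split; apply: lt0r_neq0; lra.
lra.
Qed.

Lemma hpos (n : nat) : 0 < (n.+1%:R : R)^-1 /\ (n.+1%:R : R)^-1 <= 1 /\ n.+1%:R * (n.+1%:R : R)^-1 = 1.
Proof. by apply: hpos_gen; rewrite ler1n. Qed.

Lemma ninf_pair (p1 p2 q1 q2 : R) : ninf (p1, p2) (q1, q2) = Num.max `|p1 - q1| `|p2 - q2|.
Proof. by []. Qed.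

Lemma harmE n : harmonic n = (n.+1%:R : R)^-1.
Proof. by []. Qed.

Lemma notUC : ~ UC_property (@exA R) (@exB R).
Proof.
move=> H.
pose x := fun n : nat => ((n.+3%:R : R), (n.+3%:R : R)^-1).
pose y := fun n : nat => ((n.+2%:R : R), (n.+3%:R : R)^-1 - 1).
pose z := fun n : nat => ((n.+1%:R : R), (n.+1%:R : R)^-1).
have e3 n : (n.+3%:R : R) = n.+2%:R + 1 by rewrite -[n.+3]addn1 natrD.
have e2 n : (n.+2%:R : R) = n.+1%:R + 1 by rewrite -[n.+2]addn1 natrD.
have Hx n : exA (x n) by split => //=; rewrite ltr0Sn.
have Hz n : exA (z n) by split => //=; rewrite ltr0Sn.
have Hy n : exB (y n).
  left; split => /=; last by rewrite -e3.
  have := ltr0Sn R n.+1; lra.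
have exy : (fun n => ninf (x n) (y n)) = fun=> 1.
  apply: funext => n; rewrite /x /y ninf_pair e3.
  have -> : (n.+2%:R : R) + 1 - n.+2%:R = 1 by lra.
  have -> : (n.+2%:R + 1 : R)^-1 - ((n.+2%:R + 1)^-1 - 1) = 1 by lra.
  by rewrite normr1 maxxx.
have ezy : (fun n => ninf (z n) (y n)) = fun n => 1 + (harmonic n - harmonic (n + 2)%N).
  apply: funext => n; rewrite /z /y ninf_pair !harmE addn2.
  have le : (n.+3%:R : R)^-1 <= n.+1%:R^-1.
    apply: (@inv_anti (n.+1%:R) (n.+3%:R)); first by rewrite ler1n.
    by rewrite ler_nat; exact: leq_trans (leqnSn n.+1) (leqnSn n.+2).
  rewrite e2 opprD addrA subrr add0r normrN normr1.
  move: le; set u := (n.+1%:R : R)^-1; set v := (n.+3%:R : R)^-1 => le.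
  rewrite ger0_norm; last lra.
  apply/eqP; rewrite eq_le; apply/andP; split.
    rewrite ge_max; apply/andP; split; lra.
  rewrite le_max; apply/orP; right; lra.
have exz : (fun n => ninf (x n) (z n)) = fun=> 2.
  apply: funext => n; rewrite /x /z ninf_pair.
  rewrite e3 e2; have m1 : 1 <= (n.+1%:R : R) by rewrite ler1n.
  move: m1; set m := (n.+1%:R : R) => m1.
  have m2 : 1 <= m + 1 + 1 by lra.
  have [a0 [a1 a2]] := hpos_gen m m1; have [b0 [b1 b2]] := hpos_gen _ m2.
  have -> : m + 1 + 1 - m = 2 by lra.
  move: a0 a1 b0 b1; set u := m^-1; set v := (m + 1 + 1)^-1 => a0 a1 b0 b1.
  rewrite ger0_norm; last lra.
  apply/eqP; rewrite eq_le; apply/andP; split.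
    rewrite ge_max lexx /=; rewrite ler_norml; apply/andP; split; lra.
  by rewrite le_max lexx.
have c1 : (fun n => ninf (x n) (y n)) @ \oo --> dist (@exA R) (@exB R).
  by rewrite exy distAB; exact: cvg_cst.
have c2 : (fun n => ninf (z n) (y n)) @ \oo --> dist (@exA R) (@exB R).
  rewrite ezy distAB.
  have h2 := @cvg_harmonic R; rewrite -(cvg_shiftn 2) in h2.
  have := cvgD (cvg_cst (1:R)) (cvgB (@cvg_harmonic R) h2).
  rewrite subr0 addr0 => h; apply: h; exact: _.
have := H x z y Hx Hz Hy c1 c2; rewrite exz => c3.
have c4 : (fun=> (2:R)) @ \oo --> (2:R) by exact: cvg_cst.
have := cvg_unique _ c3 c4; move=> h; have e := h (@norm_hausdorff _ _) _.
have : (0:R) = 2 by apply: e; exact: _.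
lra.
Qed.

End H.
Arguments key {R a b}.
Arguments dA_le {R a}.
Arguments dB_le {R b}.

Theorem mainTheorem17 (R : realType) :
  dist (@exA R) (@exB R) = 1 /\
  (forall a, @exA R a -> @exB R (@exT R a)) /\
  (forall b, @exB R b -> @exA R (@exT R b)) /\
  (forall a b, @exA R a -> @exB R b ->
     ninf (@exT R a) (@exT R b) <= ninf a b / 2 + dist (@exA R) (@exB R) / 2) /\
  (exists! x, best_prox (@exA R) (@exB R) (@exT R) x) /\
  ~ UC_property (@exA R) (@exB R).
Proof.
split; first exact: distAB.
split; first by move=> a; exact: TA_B.
split; first by move=> b; exact: TB_A.
split.
  move=> a b Ha Hb; rewrite TA // TB // distAB ninf_pair.
  have := key Ha Hb; have := dA_le Ha; have := dB_le Hb.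
  have := dA_ge0 R a; have := dB_ge0 R b.
  set d := dpt a _; set e := dpt b _ => e0 d0 l1 l2 k.
  have -> : -(d/2) - (1 + e/2) = -(1 + d/2 + e/2) by lra.
  rewrite normrN ger0_norm ?maxxx; lra.
split; last exact: notUC.
have d11 : dpt ((1, 1) : R * R) (@exAbar R) = 0.
  apply: le_anti; rewrite dA_ge0 andbT.
  by have := @dpt_le R (1, 1) _ _ (@Abar11 R); rewrite ninf_self.
exists (1, 1); split.
  split; first exact: A11.
  rewrite TA; last exact: A11.
  by rewrite d11 mul0r oppr0 ninf_pair !subr0 normr1 maxxx distAB.
move=> [x1 x2] [Hx E]; rewrite TA // ninf_pair distAB in E.
have d0 := dA_ge0 R (x1, x2); move: E d0; set d := dpt _ _ => E d0.
have h1 : `|x1 - - (d / 2)| <= 1 by rewrite -[X in _ <= X]E le_max lexx.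
have h2 : `|x2 - - (d / 2)| <= 1 by rewrite -[X in _ <= X]E le_max lexx orbT.
move: h1 h2; rewrite !ler_norml => /andP [_ h1] /andP [_ h2].
case: Hx => /= p q.
have iv := @mulfV _ _ (lt0r_neq0 p).
have iv0 : 0 < x1^-1 by rewrite invr_gt0.
have pr : 1 <= x1 * x2 by nra.
have ex1 : x1 = 1 by nra.
have ex2 : x2 = 1 by nra.
by rewrite ex1 ex2.
Qed.
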